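(* Let $X$ be a finite $d$-dimensional CW-complex with set $S_d$ of (oriented) $d$-cells, and let $V_0\subset S_d$ be a spanning forest of $X$. Let $N=|S_d-V_0|$ and enumerate $S_d-V_0$ as $e_1,\dots,e_N$. Then $$\det((U+1)\,Id-Mesh(X;\{z(e_a)\},geometric))=\det(U\,Id-Mesh^\#(X;\{z(e_a)\},geometric))=U^N+\sum_{j=1}^N(-1)^j c_j U^{N-j},$$ where $$c_j=\sum_{V}\left(\frac{t_{d-1}(X_V)}{t_{d-1}(X_{V_0})}\right)^2,$$ the sum being over all spanning forests $V$ of $X$ with $|V\cap(S_d-V_0)|=j$.
   Context: $X^{d-1}$ is the $(d-1)$-skeleton, and for $V\subset S_d$, $X_V=X^{d-1}\cup V$. $C_d(\cdot;\mathbb R)$ denotes cellular chains, with the inner product making the oriented $d$-cells orthonormal; $\partial_d$ is the cellular boundary and $B_{d-1}$ the $(d-1)$-boundaries. A subset $V\subset S_d$ is a spanning forest of $X$ if the composite $C_d(X_V;\mathbb R)\xrightarrow{\partial_d}B_{d-1}(X_V;\mathbb R)\subset B_{d-1}(X;\mathbb R)$ is an isomorphism. For a finite CW complex $Y$, $t_{d-1}(Y)$ is the order of the torsion subgroup of $H_{d-1}(Y;\mathbb Z)$. Given the spanning forest $V_0$, for each $e\in S_d-V_0$ there is a unique $D(e)\in C_d(X_{V_0};\mathbb R)$ with $\partial_d D(e)=\partial_d e$; put $z(e)=e-D(e)\in Z_d(X;\mathbb R)$ (the geometric basis of $Z_d(X;\mathbb R)$). Then $Mesh(X;\{z(e_a)\},geometric)=(\langle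 z(e_a),z(e_b)\rangle)_{a,b=1}^N$, which equals $Id+Mesh^\#(X;\{z(e_a)\},geometric)$ with $Mesh^\#(X;\{z(e_a)\},geometric)=(\langle D(e_a),D(e_b)\rangle)_{a,b=1}^N$. *)

(* Defs.v *)
From HB Require Import structures.
From mathcomp Require Import all_boot all_order all_algebra.
From mathcomp Require Import boolp reals.
From Stdlib Require Import ClassicalEpsilon.

Unset Printing Implicit Defensive.
Import Order.TTheory GRing.Theory Num.Theory.
Local Open Scope ring_scope.

(* A finite d-dimensional CW complex is represented by its cellular chain
   complex: ncell k = number of (oriented) k-cells, the k-cells being indexed
   by 'I_(ncell k); bd k : 'M[int]_(ncell k, ncell k.+1) is the cellular
   boundary map C_{k+1} -> C_k acting on column vectors. *)
Record cw_chain (d : nat) := CWChain {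
  ncell : nat -> nat;
  bd : forall k, 'M[int]_(ncell k, ncell k.+1);
  bd_bd : forall k, bd k *m bd k.+1 = 0;
  ncell_dim : forall k, (d < k)%N -> ncell k = 0%N }.
Arguments ncell {d}.
Arguments bd {d}.

Definition cbd {d} (X : cw_chain d) (k : nat) : 'M[int]_(ncell X k.-1, ncell X k) :=
  match k return 'M[int]_(ncell X k.-1, ncell X k) with
  | 0 => 0
  | k'.+1 => bd X k'
  end.

Definition supp_in {R : nmodType} {n} (x : 'cV[R]_n) (V : {set 'I_n}) :=
  forall i, i \notin V -> x i ord0 = 0.

(* ---- integral homology H_{d-1}(X_V; Z), X_V = X^{d-1} \cup V ---- *)
Definition bnd_int {d} (X : cw_chain d) (V : {set 'I_(ncell X d)})
  (y : 'cV[int]_(ncell X d.-1)) :=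
  exists x : 'cV[int]_(ncell X d), supp_in x V /\ y = cbd X d *m x.

Definition cyc_int {d} (X : cw_chain d) (y : 'cV[int]_(ncell X d.-1)) :=
  cbd X d.-1 *m y = 0.

(* representatives of torsion classes of H_{d-1}(X_V;Z) = Z_{d-1}/B_{d-1}(X_V) *)
Definition tors_int {d} (X : cw_chain d) (V : {set 'I_(ncell X d)})
  (y : 'cV[int]_(ncell X d.-1)) :=
  cyc_int X y /\ exists k : int, k != 0 /\ bnd_int X V (k *: y).

Definition is_tors_order {d} (X : cw_chain d) (V : {set 'I_(ncell X d)}) (n : nat) :=
  exists f : 'I_n -> 'cV[int]_(ncell X d.-1),
    [/\ forall i, tors_int X V (f i),
        forall i j, bnd_int X V (f i - f j) -> i = j &
        forall y, tors_int X V y -> exists i, bnd_int X V (y - f i)].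

Definition tors_order {d} (X : cw_chain d) (V : {set 'I_(ncell X d)}) : nat :=
  epsilon (inhabits 0%N) (is_tors_order X V).

Definition bdR (R : realType) {d} (X : cw_chain d) : 'M[R]_(ncell X d.-1, ncell X d) :=
  map_mx (fun z : int => z%:~R) (cbd X d).

(* V is a spanning forest: C_d(X_V;R) -> B_{d-1}(X_V;R) \subset B_{d-1}(X;R)
   is an isomorphism (injective, and onto B_{d-1}(X;R)) *)
Definition spanning_forest (R : realType) {d} (X : cw_chain d)
  (V : {set 'I_(ncell X d)}) :=
  (forall x : 'cV[R]_(ncell X d), supp_in x V -> bdR R X *m x = 0 -> x = 0) /\
  (forall x : 'cV[R]_(ncell X d),
     exists x', supp_in x' V /\ bdR R X *m x' = bdR R X *m x).

Definition cdot {R : realType} {n} (x y : 'cV[R]_n) : R := \sum_i x i ord0 * y i ord0.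

Definition cell (R : realType) {n} (c : 'I_n) : 'cV[R]_n := delta_mx c ord0.

(* Main.v *)
Require Import Defs.
From HB Require Import structures.
From mathcomp Require Import all_boot all_order all_algebra fingroup perm zify.
From mathcomp Require Import boolp reals ring.
From Stdlib Require Import ClassicalEpsilon.
Import Order.TTheory GRing.Theory Num.Theory.
Local Open Scope ring_scope.

Lemma det_mul_rect (Rg : comPzRingType) r m (A : 'M[Rg]_(r, m)) (B : 'M[Rg]_(m, r)) :
  \det (A *m B) = \sum_(f : {ffun 'I_r -> 'I_m})
      (\prod_i A i (f i)) * \det (\matrix_(i, j) B (f i) j).
Proof.
transitivity (\sum_(s : 'S_r) \sum_(f : {ffun 'I_r -> 'I_m})
   (-1) ^+ s * \prod_i (A i (f i) * B (f i) (s i))).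
  apply: eq_bigr => s _; rewrite -big_distrr /=; congr (_ * _).
  rewrite -(bigA_distr_bigA (fun i k => A i k * B k (s i))) /=.
  by apply: eq_bigr => i _; rewrite mxE.
rewrite exchange_big; apply: eq_bigr => f _ /=.
rewrite big_distrr /=; apply: eq_bigr => s _.
rewrite big_split /= mulrCA; congr (_ * (_ * _)).
by apply: eq_bigr => i _; rewrite mxE.
Qed.

Lemma cauchy_binet_sq (Rg : comPzRingType) r m (A : 'M[Rg]_(r, m)) (y : 'I_m -> Rg) :
  r`!%:R * \det (A *m (diag_mx (\row_c y c) *m A^T)) =
  \sum_(f : {ffun 'I_r -> 'I_m})
     (\prod_i y (f i)) * \det (\matrix_(i, j) A i (f j)) ^+ 2.
Proof.
pose Af (f : {ffun 'I_r -> 'I_m}) := \matrix_(i, j) A i (f j).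
pose T (f : {ffun 'I_r -> 'I_m}) := (\prod_i y (f i)) * \det (Af f).
have Ef (f : {ffun 'I_r -> 'I_m}) : \det (\matrix_(i, j) (diag_mx (\row_c y c) *m A^T) (f i) j) = T f.
  have -> : \matrix_(i, j) (diag_mx (\row_c y c) *m A^T) (f i) j
      = diag_mx (\row_i y (f i)) *m (Af f)^T.
    by apply/matrixP => i j; rewrite !mul_diag_mx !mxE.
  by rewrite det_mulmx det_diag det_tr; under eq_bigr do rewrite mxE.
rewrite det_mul_rect; under eq_bigr do rewrite Ef.
set S := \sum_f _.
have ES (s : 'S_r) : S = \sum_(f : {ffun 'I_r -> 'I_m})
    (-1) ^+ s * (\prod_i A i (f (s i))) * T f.
  pose h (f : {ffun 'I_r -> 'I_m}) := [ffun i => f (s i)].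
  have hinj : injective h.
    move=> f1 f2 /ffunP E; apply/ffunP => j.
    by have := E (s^-1 j)%g; rewrite !ffunE permKV.
  rewrite /S (reindex_inj hinj); apply: eq_bigr => f _.
  have -> : T (h f) = (-1) ^+ s * T f.
    rewrite /T mulrCA; congr (_ * _).
      rewrite [RHS](reindex_inj (@perm_inj _ s)); apply: eq_bigr => i _.
      by rewrite ffunE.
    have -> : Af (h f) = col_perm s (Af f).
      by apply/matrixP => i j; rewrite !mxE ffunE.
    by rewrite col_permE det_mulmx det_perm odd_permV mulrC.
  rewrite mulrCA mulrA; congr (_ * _ * _).
  by apply: eq_bigr => i _; rewrite ffunE.
transitivity (\sum_(s : 'S_r) S).
  by rewrite sumr_const card_Sn mulr_natl.
under eq_bigr => s _ do rewrite (ES s).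
rewrite exchange_big; apply: eq_bigr => f _ /=.
rewrite -big_distrl /=.
have -> : \sum_(s : 'S_r) (-1) ^+ s * \prod_i A i (f (s i)) = \det (Af f).
  by apply: eq_bigr => s _; congr (_ * _); apply: eq_bigr => i _; rewrite mxE.
by rewrite /T expr2 mulrC mulrA.
Qed.

Lemma sylvester (Rg : comPzRingType) r N (x : Rg) (A : 'M[Rg]_(r, N)) (B : 'M[Rg]_(N, r)) :
  x ^+ N * \det (x%:M - A *m B) = x ^+ r * \det (x%:M - B *m A).
Proof.
pose M := block_mx (x%:M) A B (1%:M : 'M_N).
have h1 : M *m block_mx 1%:M 0 (- B) 1%:M = block_mx (x%:M - A *m B) A 0 1%:M.
  rewrite mulmx_block; congr block_mx.
  - by rewrite mulmx1 mulmxN.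
  - by rewrite mulmx0 mulmx1 add0r.
  - by rewrite mulmx1 mulmxN mul1mx addrN.
  - by rewrite mulmx0 mulmx1 add0r.
have h2 : block_mx 1%:M 0 (- B) x%:M *m M = block_mx x%:M A 0 (x%:M - B *m A).
  rewrite mulmx_block; congr block_mx.
  - by rewrite mul1mx mul0mx addr0.
  - by rewrite mul1mx mul0mx addr0.
  - by rewrite mulNmx mul_mx_scalar mul_scalar_mx addNr.
  - by rewrite mulmx1 mulNmx addrC.
have d1 := congr1 determinant h1; have d2 := congr1 determinant h2.
rewrite det_mulmx det_lblock !det1 mulr1 det_ublock det1 !mulr1 in d1.
rewrite det_mulmx det_lblock det1 mul1r det_ublock !det_scalar in d2.
by rewrite -d1 d2.
Qed.

Set Implicit Arguments.
Unset Strict Implicit.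

Definition abnd {n m} (Bd : 'M[int]_(n, m)) (V : {set 'I_m}) (y : 'cV[int]_n) :=
  exists x : 'cV[int]_m, supp_in x V /\ y = Bd *m x.
Definition ators {n m p} (Cy : 'M[int]_(p, n)) (Bd : 'M[int]_(n, m)) V y :=
  Cy *m y = 0 /\ exists k : int, k != 0 /\ abnd Bd V (k *: y).
Definition aiso {n m p} (Cy : 'M[int]_(p, n)) (Bd : 'M[int]_(n, m)) V (q : nat) :=
  exists f : 'I_q -> 'cV[int]_n,
    [/\ forall i, ators Cy Bd V (f i),
        forall i j, abnd Bd V (f i - f j) -> i = j &
        forall y, ators Cy Bd V y -> exists i, abnd Bd V (y - f i)].

Lemma abndB n m (Bd : 'M[int]_(n, m)) V a b :
  abnd Bd V a -> abnd Bd V b -> abnd Bd V (a - b).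
Proof.
move=> [x [sx ->]] [x' [sx' ->]]; exists (x - x'); split; last by rewrite mulmxBr.
by move=> i iV; rewrite !mxE sx // sx' // subrr.
Qed.

Lemma aiso_le n m p (Cy : 'M[int]_(p, n)) (Bd : 'M[int]_(n, m)) V q1 q2 :
  aiso Cy Bd V q1 -> aiso Cy Bd V q2 -> (q1 <= q2)%N.
Proof.
move=> [f1 [t1 d1 c1]] [f2 [t2 d2 c2]].
pose h i := proj1_sig (cid (c2 _ (t1 i))).
have hP i : abnd Bd V (f1 i - f2 (h i)) := proj2_sig (cid (c2 _ (t1 i))).
have hinj : injective h.
  move=> i j hij; apply: d1.
  have := abndB (hP i) (hP j); rewrite hij.
  by rewrite opprB addrA subrK.
by have := leq_card h hinj; rewrite !card_ord.
Qed.

Lemma aiso_uniq n m p (Cy : 'M[int]_(p, n)) (Bd : 'M[int]_(n, m)) V q1 q2 :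
  aiso Cy Bd V q1 -> aiso Cy Bd V q2 -> q1 = q2.
Proof.
by move=> h1 h2; apply/eqP; rewrite eqn_leq (aiso_le h1 h2) (aiso_le h2 h1).
Qed.

Definition selm (Rg : pzSemiRingType) {m r} (f : 'I_r -> 'I_m) : 'M[Rg]_(m, r) :=
  \matrix_(c, j) ((c == f j)%:R).

Lemma sum_delta (Rg : pzSemiRingType) (I : finType) (a : I) (F : I -> Rg) :
  \sum_c ((c == a)%:R * F c) = F a.
Proof.
rewrite (bigD1 a) //= eqxx mul1r big1 ?addr0 // => c /negbTE ->.
by rewrite mul0r.
Qed.

Lemma selmT_mul (Rg : pzSemiRingType) m r q (f : 'I_r -> 'I_m) (x : 'M[Rg]_(m, q)) :
  (selm Rg f)^T *m x = \matrix_(j, k) x (f j) k.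
Proof.
by apply/matrixP => j k; rewrite !mxE; under eq_bigr do rewrite !mxE;
  rewrite sum_delta.
Qed.

Lemma selm_mul_in (Rg : pzSemiRingType) m r (f : 'I_r -> 'I_m) (finj : injective f)
   (u : 'cV[Rg]_r) j : (selm Rg f *m u) (f j) 0 = u j 0.
Proof.
rewrite !mxE; under eq_bigr do rewrite mxE (inj_eq finj) eq_sym.
by rewrite sum_delta.
Qed.

Lemma selm_mul_out (Rg : pzSemiRingType) m r (f : 'I_r -> 'I_m)
   (u : 'cV[Rg]_r) c : (forall j, f j != c) -> (selm Rg f *m u) c 0 = 0.
Proof.
move=> hc; rewrite !mxE big1 // => j _; rewrite mxE eq_sym (negbTE (hc j)).
by rewrite mul0r.
Qed.

Lemma selm_suppM (Rg : pzSemiRingType) m r q (f : 'I_r -> 'I_m) (finj : injective f)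
   (V : {set 'I_m}) (hV : forall c, c \in V <-> exists j, f j = c)
   (x : 'M[Rg]_(m, q)) : (forall i k, i \notin V -> x i k = 0) ->
   x = selm Rg f *m ((selm Rg f)^T *m x).
Proof.
move=> sx; apply/matrixP => c k.
rewrite selmT_mul mxE.
case: (boolP (c \in V)) => cV.
  have [j <-] := (hV c).1 cV.
  rewrite (bigD1 j) //= big1.
    by rewrite !mxE eqxx mul1r addr0.
  move=> j' hj'; rewrite /selm !mxE (inj_eq finj) eq_sym (negbTE hj') mul0r.
  by [].
rewrite sx // big1 // => j _; rewrite /selm !mxE.
case: eqP => [ejc|]; last by rewrite mul0r.
by move/negP: cV; case; apply/(hV c).2; exists j.
Qed.

Lemma selm_supp (Rg : pzSemiRingType) m r (f : 'I_r -> 'I_m) (finj : injective f)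
   (V : {set 'I_m}) (hV : forall c, c \in V <-> exists j, f j = c)
   (x : 'cV[Rg]_m) : supp_in x V -> x = selm Rg f *m ((selm Rg f)^T *m x).
Proof.
by move=> sx; apply: (selm_suppM finj hV) => i k iV; rewrite (ord1 k) sx.
Qed.

Lemma supp_selm (Rg : pzSemiRingType) m r (f : 'I_r -> 'I_m)
   (V : {set 'I_m}) (hV : forall c, c \in V <-> exists j, f j = c)
   (u : 'cV[Rg]_r) : supp_in (selm Rg f *m u) V.
Proof.
move=> c cV; rewrite selm_mul_out // => j; apply/eqP => ejc.
by move/negP: cV; apply; apply/(hV c).2; exists j.
Qed.

Lemma selmTK (Rg : pzSemiRingType) m r (f : 'I_r -> 'I_m) (finj : injective f) :
  (selm Rg f)^T *m selm Rg f = 1%:M.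
Proof.
apply/matrixP => i j; rewrite selmT_mul !mxE.
by rewrite (inj_eq finj).
Qed.

Lemma abnd_sel n m (Bd : 'M[int]_(n, m)) r (f : 'I_r -> 'I_m) (finj : injective f)
   (V : {set 'I_m}) (hV : forall c, c \in V <-> exists j, f j = c) y :
  abnd Bd V y <-> exists u : 'cV[int]_r, y = (Bd *m selm int f) *m u.
Proof.
split.
  move=> [x [sx ->]]; exists ((selm int f)^T *m x).
  by rewrite -mulmxA -(selm_supp finj hV sx).
move=> [u ->]; exists (selm int f *m u); split; last by rewrite mulmxA.
exact: supp_selm.
Qed.

Definition Dg (Rg : pzSemiRingType) n r (dd : seq Rg) : 'M[Rg]_(n, r) :=
  \matrix_(i, j) (dd`_i *+ (i == j :> nat)).

Lemma Dg_col (Rg : pzSemiRingType) r k (dd : seq Rg) :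
  Dg (r + k) r dd = col_mx (diag_mx (\row_i dd`_i)) 0.
Proof.
apply/matrixP => i j; rewrite mxE.
case: (split_ordP i) => i' ->.
  by rewrite col_mxEu !mxE.
rewrite col_mxEd mxE /=.
have -> : (r + i' == j)%N = false.
  by apply: negbTE; rewrite neq_ltn; apply/orP; right; exact: ltn_addr (ltn_ord j).
by [].
Qed.

Lemma small_diff (a b dd w : int) : 0 <= a -> a < `|dd| -> 0 <= b -> b < `|dd| ->
  a - b = dd * w -> a = b.
Proof.
move=> a0 ad b0 bd E.
have [w0|wn0] := eqVneq w 0.
  by move: E; rewrite w0 mulr0 => /eqP; rewrite subr_eq0 => /eqP.
have h1 : `|a - b| < `|dd|.
  rewrite ltr_norml; apply/andP; split; lia.
rewrite E normrM in h1.
have h2 : 1 <= `|w| by rewrite -gtz0_ge1 normr_gt0.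
have h3 : `|dd| <= `|dd| * `|w| by rewrite ler_peMr.
by have := Order.POrderTheory.lt_le_trans h1 h3; rewrite Order.POrderTheory.ltxx.
Qed.

Lemma T1 n m p (Cy : 'M[int]_(p, n)) (Bd : 'M[int]_(n, m)) (hC : Cy *m Bd = 0)
  r (f : 'I_r -> 'I_m) (finj : injective f) (V : {set 'I_m})
  (hV : forall c, c \in V <-> exists j, f j = c)
  (L : 'M[int]_n) (Rm : 'M[int]_r) (dd : seq int)
  (hL : L \in unitmx) (hR : Rm \in unitmx) (hd : forall i : 'I_r, dd`_i != 0)
  (hr : (r <= n)%N)
  (hB : Bd *m selm int f = L *m Dg n r dd *m Rm) :
  aiso Cy Bd V (absz (\prod_(i < r) dd`_i)).
Proof.
have [k hk] : exists k, n = (r + k)%N by exists (n - r)%N; rewrite subnKC.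
subst n.
rewrite Dg_col in hB.
set Dl := diag_mx (\row_i dd`_i) in hB.
set Li := invmx L.
have LiL : Li *m L = 1%:M by rewrite mulVmx.
have LLi : L *m Li = 1%:M by rewrite mulmxV.
have hdet : \det Dl != 0.
  rewrite det_diag; apply/prodf_neq0 => i _; rewrite mxE; exact: hd.
have hbnd : forall y, abnd Bd V y <-> exists w : 'cV[int]_r, Li *m y = col_mx (Dl *m w) 0.
  move=> y; rewrite (abnd_sel _ finj hV); split.
    move=> [u ->]; exists (Rm *m u).
    by rewrite hB !mulmxA LiL mul1mx !mul_col_mx !mul0mx.
  move=> [w hw]; exists (invmx Rm *m w).
  have -> : y = L *m (Li *m y) by rewrite mulmxA LLi mul1mx.
  rewrite hw hB -!mulmxA; congr (L *m _).
  by rewrite (mulmxA Rm) mulmxV // mul1mx mul_col_mx mul0mx.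
have htors : forall y, ators Cy Bd V y <-> dsubmx (Li *m y) = 0.
  move=> y; split.
    move=> [_ [kk [kk0 /hbnd [w hw]]]].
    move: hw; rewrite -scalemxAr -[Li *m y]vsubmxK scale_col_mx.
    case/eq_col_mx => _ /eqP; rewrite scalemx_eq0 (negbTE kk0) /=.
    by rewrite col_mxKd; move/eqP.
  move=> hd0.
  set u := usubmx (Li *m y).
  have hLy : Li *m y = col_mx u 0 by rewrite -hd0 vsubmxK.
  have hb : abnd Bd V (\det Dl *: y).
    apply/hbnd; exists (\adj Dl *m u).
    by rewrite -scalemxAr hLy mulmxA mul_mx_adj mul_scalar_mx scale_col_mx scaler0.
  split; last by exists (\det Dl).
  move: hb => [x [_ hx]].
  have : Cy *m (\det Dl *: y) = 0 by rewrite hx mulmxA hC mul0mx.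
  by rewrite -scalemxAr => /eqP; rewrite scalemx_eq0 (negbTE hdet) /= => /eqP.
pose T := {dffun forall i : 'I_r, 'I_(absz dd`_i)}.
pose tc (t : T) : 'cV[int]_r := \col_i ((t i : nat)%:Z).
pose g (t : T) := L *m col_mx (tc t) 0.
have hLg t : Li *m g t = col_mx (tc t) 0 by rewrite /g mulmxA LiL mul1mx.
have hcard : #|T| = (absz (\prod_(i < r) dd`_i)).
  rewrite card_dep_ffun foldrE big_map big_enum /=.
  rewrite (@big_morph _ _ absz 1%N muln 1%R *%R abszM (erefl 1%N)) /=.
  by apply: eq_bigr => i _; rewrite card_ord.
rewrite -hcard.
exists (fun i => g (enum_val i)); split.
- by move=> i; apply/htors; rewrite hLg col_mxKd.
- move=> i j /hbnd [w].
  rewrite mulmxBr !hLg opp_col_mx add_col_mx subrr.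
  case/eq_col_mx => E _.
  apply: enum_val_inj; apply/ffunP => l; apply: val_inj => /=.
  have := congr1 (fun M : 'cV[int]_r => M l 0) E; rewrite mul_diag_mx !mxE.
  move=> El.
  have bd (t : T) : ((t l : nat)%:Z) < `|dd`_l|.
    by rewrite -abszE ltz_nat ltn_ord.
  have h0 (t : T) : 0 <= ((t l : nat)%:Z) by [].
  have := small_diff (h0 _) (bd _) (h0 _) (bd _) El.
  by case.
- move=> y /htors hd0.
  set u := usubmx (Li *m y).
  have hLy : Li *m y = col_mx u 0 by rewrite -hd0 vsubmxK.
  clearbody u.
  have modlt (l : 'I_r) : (absz ((u l ord0 %% dd`_l)%Z)%R < absz (dd`_l)%R)%N.
    by rewrite -ltz_nat !abszE (ger0_norm (modz_ge0 _ (hd l))) ltz_mod.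
  pose t : T := finfun (fun l => Ordinal (modlt l)).
  exists (enum_rank t); rewrite enum_rankK.
  apply/hbnd; exists (\col_l ((u l ord0 %/ dd`_l)%Z)).
  rewrite mulmxBr hLg hLy opp_col_mx add_col_mx subrr; congr col_mx.
  apply/matrixP => l z; rewrite (ord1 z) mul_diag_mx !mxE ffunE /=.
  rewrite abszE (ger0_norm (modz_ge0 _ (hd l))).
  by rewrite {1}(divz_eq (u l ord0) (dd`_l)) addrK mulrC.
Qed.


Lemma normr_intr (R : realType) (z : int) : `|(z%:~R : R)| = (absz z)%:R.
Proof. by rewrite -intr_norm -abszE. Qed.

Lemma unit_int_abs (z : int) : z \is a GRing.unit -> absz z = 1%N.
Proof.
move=> hz; have := mulrV hz; move/(congr1 absz); rewrite abszM /=.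
by move/eqP; rewrite muln_eq1 => /andP [/eqP -> _].
Qed.

Lemma map_intr_inj (R : realType) m n (A B : 'M[int]_(m, n)) :
  map_mx (intr : int -> R) A = map_mx intr B -> A = B.
Proof.
move/matrixP => E; apply/matrixP => i j; have := E i j; rewrite !mxE.
exact: intr_inj.
Qed.

Lemma snf_nonzero (R : realType) n r (Bf : 'M[int]_(n, r))
  (hinj : forall x : 'cV[R]_r, map_mx intr Bf *m x = 0 -> x = 0)
  (L : 'M[int]_n) (Rm : 'M[int]_r) (dd : seq int) (hR : Rm \in unitmx)
  (hB : Bf = L *m Dg n r dd *m Rm) :
  (forall i : 'I_r, dd`_i != 0) /\ (r <= n)%N.
Proof.
have key (i : 'I_r) : (i < n)%N && (dd`_i != 0).
  apply/negPn/negP => hi.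
  pose x : 'cV[int]_r := invmx Rm *m delta_mx i 0.
  have hx : Bf *m x = 0.
    rewrite hB -!mulmxA (mulmxA Rm) mulmxV // mul1mx -colE.
    have -> : col i (Dg n r dd) = 0.
      apply/matrixP => a b; rewrite !mxE.
      case: eqP => // hai; rewrite mulr1n.
      case: (eqVneq dd`_a 0) => // hda; exfalso; move/negP: hi; apply; rewrite -hai ltn_ord /=.
      by [].
    by rewrite mulmx0.
  have hx0 : map_mx (intr : int -> R) x = 0.
    by apply: hinj; rewrite -map_mxM hx map_mx0.
  have : x = 0 by apply: (@map_intr_inj R); rewrite hx0 map_mx0.
  move/(congr1 (mulmx Rm)); rewrite /x mulmxA mulmxV // mul1mx mulmx0.
  by move/matrixP => /(_ i 0); rewrite !mxE !eqxx.
split => [i|]; first by case/andP: (key i).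
rewrite leqNgt; apply/negP => hnr.
by have := key (Ordinal hnr); rewrite ltnn.
Qed.

Lemma T2 (R : realType) n r (L L0 : 'M[int]_n) (Rm Rm0 : 'M[int]_r)
  (dd dd0 : seq int) (Cf : 'M[R]_r)
  (hL : L \in unitmx) (hL0 : L0 \in unitmx) (hR : Rm \in unitmx) (hR0 : Rm0 \in unitmx)
  (hd : forall i : 'I_r, dd`_i != 0) (hd0 : forall i : 'I_r, dd0`_i != 0)
  (hr : (r <= n)%N)
  (hE : map_mx intr (L *m Dg n r dd *m Rm) =
        map_mx intr (L0 *m Dg n r dd0 *m Rm0) *m Cf) :
  ((absz (\prod_(i < r) dd`_i))%:R : R) =
    (absz (\prod_(i < r) dd0`_i))%:R * `|\det Cf|.
Proof.
have [k hk] : exists k, n = (r + k)%N by exists (n - r)%N; rewrite subnKC.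
subst n.
rewrite !Dg_col in hE.
set D1 := diag_mx (\row_i dd`_i) in hE.
set D0 := diag_mx (\row_i dd0`_i) in hE.
set Q := invmx L0 *m L.
set W := map_mx intr Rm0 *m Cf *m map_mx (intr : int -> R) (invmx Rm).
have hQ : map_mx intr Q *m map_mx intr (col_mx D1 0) = map_mx intr (col_mx D0 0) *m W.
  have := congr1 (fun M => map_mx (intr : int -> R) (invmx L0) *m M
                              *m map_mx intr (invmx Rm)) hE.
  rewrite /= !map_mxM.
  rewrite -!mulmxA -map_mxM mulmxV // map_mx1 mulmx1.
  rewrite (mulmxA (map_mx intr (invmx L0)) (map_mx intr L0)) -(map_mxM _ (invmx L0) L0) mulVmx // map_mx1 mul1mx => H.
  by rewrite H /W !mulmxA.
rewrite -[Q]submxK map_block_mx !map_col_mx !map_mx0 mul_block_col in hQ.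
rewrite !mulmx0 !addr0 mul_col_mx mul0mx in hQ.
case/eq_col_mx: hQ => hA hC.
have hD1 : \det D1 != 0.
  rewrite det_diag; apply/prodf_neq0 => i _; rewrite mxE; exact: hd.
have uD1 : map_mx (intr : int -> R) D1 \in unitmx.
  by rewrite unitmxE det_map_mx unitfE intr_eq0.
have hQc : dlsubmx Q = 0.
  apply: (@map_intr_inj R); rewrite map_mx0.
  by rewrite -[LHS](mulmxK uD1) hC mul0mx.
have uQ : Q \in unitmx by rewrite unitmx_mul unitmx_inv hL0 hL.
have uQa : \det (ulsubmx Q) \is a GRing.unit.
  move: uQ; rewrite unitmxE -[Q]submxK hQc det_ublock unitrM.
  by rewrite block_mxKul; case/andP.
have := congr1 determinant hA.
rewrite det_mulmx [X in _ = X]det_mulmx /W [X in _ = _ * X]det_mulmx [X in _ = _ * (X * _)]det_mulmx. 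
rewrite !det_map_mx.
move/(congr1 (fun x : R => `|x|)); rewrite /= !normrM !normr_intr.
rewrite (unit_int_abs uQa) (unit_int_abs (_ : \det Rm0 \is a GRing.unit)) -?unitmxE //.
rewrite (unit_int_abs (_ : \det (invmx Rm) \is a GRing.unit)) -?unitmxE ?unitmx_inv //.
rewrite !mul1r mulr1 /D1 /D0 !det_diag.
under eq_bigr do rewrite mxE.
by under [in RHS]eq_bigr do rewrite mxE.
Qed.


Definition sfB (R : realType) n m (BR : 'M[R]_(n, m)) (V : {set 'I_m}) :=
  (forall x : 'cV[R]_m, supp_in x V -> BR *m x = 0 -> x = 0) /\
  (forall x : 'cV[R]_m, exists x', supp_in x' V /\ BR *m x' = BR *m x).

Lemma cellE (R : realType) n m (A : 'M[R]_(n, m)) i c : (A *m cell R c) i 0 = A i c.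
Proof. by rewrite /cell -colE mxE. Qed.

Definition Cmat (R : realType) m r (f0 : 'I_r -> 'I_m) (Df : 'I_m -> 'cV[R]_m) :
  'M[R]_(r, m) := \matrix_(i, c) Df c (f0 i) 0.

Lemma G1 (R : realType) n m (BR : 'M[R]_(n, m)) (V0 : {set 'I_m}) r
  (f0 : 'I_r -> 'I_m) (f0inj : injective f0)
  (hf0 : forall c, c \in V0 <-> exists j, f0 j = c)
  (Df : 'I_m -> 'cV[R]_m) (hDs : forall c, supp_in (Df c) V0)
  (hDb : forall c, BR *m Df c = BR *m cell R c) :
  BR *m selm R f0 *m Cmat f0 Df = BR.
Proof.
set M := \matrix_(c', c) Df c c' 0 : 'M[R]_m.
have hM := @selm_suppM _ _ _ _ _ f0inj _ hf0 M.
have E : selm R f0 *m Cmat f0 Df = M.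
  rewrite [RHS]hM; last by move=> i k iV; rewrite mxE hDs.
  by rewrite selmT_mul; congr (_ *m _); apply/matrixP => i c; rewrite !mxE.
rewrite -mulmxA E; apply/matrixP => i c.
rewrite -(cellE BR) -hDb !mxE; apply: eq_bigr => k _; rewrite !mxE.
by [].
Qed.

Lemma inj_mul0 (R : realType) n p q (A : 'M[R]_(n, p))
  (hA : forall x : 'cV[R]_p, A *m x = 0 -> x = 0) (M : 'M[R]_(p, q)) :
  A *m M = 0 -> M = 0.
Proof.
move=> H; apply/matrixP => i j.
have := hA (col j M); rewrite colE mulmxA H mul0mx => /(_ erefl) /matrixP /(_ i 0).
by rewrite -colE !mxE.
Qed.

Lemma G2 (R : realType) n m (BR : 'M[R]_(n, m)) (V : {set 'I_m}) (hV : sfB BR V) r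
  (f : 'I_r -> 'I_m) (finj : injective f)
  (hf : forall c, c \in V <-> exists j, f j = c) (x : 'cV[R]_r) :
  BR *m selm R f *m x = 0 -> x = 0.
Proof.
move=> H.
have H2 : selm R f *m x = 0.
  by apply: hV.1; [exact: supp_selm | rewrite mulmxA].
by rewrite -[x]mul1mx -(selmTK _ finj) -mulmxA H2 mulmx0.
Qed.

Lemma G3 (R : realType) n m (BR : 'M[R]_(n, m)) (V0 : {set 'I_m}) (h0 : sfB BR V0) r
  (f0 : 'I_r -> 'I_m) (f0inj : injective f0)
  (hf0 : forall c, c \in V0 <-> exists j, f0 j = c)
  (Df : 'I_m -> 'cV[R]_m) (hDs : forall c, supp_in (Df c) V0)
  (hDb : forall c, BR *m Df c = BR *m cell R c)
  (V : {set 'I_m}) (f : 'I_r -> 'I_m) (finj : injective f)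
  (hf : forall c, c \in V <-> exists j, f j = c) :
  \det (Cmat f0 Df *m selm R f) != 0 -> sfB BR V.
Proof.
move=> hdet.
have uC : Cmat f0 Df *m selm R f \in unitmx by rewrite unitmxE unitfE.
have hG1 := G1 f0inj hf0 hDs hDb.
have key : BR *m selm R f = BR *m selm R f0 *m (Cmat f0 Df *m selm R f).
  by rewrite mulmxA hG1.
split.
  move=> x sx hx.
  rewrite (selm_supp finj hf sx) in hx *.
  set u := (selm R f)^T *m x in hx *.
  have : Cmat f0 Df *m selm R f *m u = 0.
    apply: (G2 h0 f0inj hf0); by rewrite (mulmxA (BR *m selm R f0)) -key -mulmxA.
  move/(congr1 (mulmx (invmx (Cmat f0 Df *m selm R f)))).
  by rewrite mulmxA mulVmx // mul1mx mulmx0 => ->; rewrite mulmx0.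
move=> x; have [x' [sx' hx']] := h0.2 x.
set w := (selm R f0)^T *m x'.
exists (selm R f *m (invmx (Cmat f0 Df *m selm R f) *m w)); split.
  exact: supp_selm.
rewrite mulmxA key -mulmxA (mulmxA (Cmat f0 Df *m selm R f)) mulmxV // mul1mx.
by rewrite /w -mulmxA -(selm_supp f0inj hf0 sx').
Qed.

Lemma G4 (R : realType) n m (BR : 'M[R]_(n, m)) (V0 : {set 'I_m}) r
  (f0 : 'I_r -> 'I_m) (f0inj : injective f0)
  (hf0 : forall c, c \in V0 <-> exists j, f0 j = c)
  (Df : 'I_m -> 'cV[R]_m) (hDs : forall c, supp_in (Df c) V0)
  (hDb : forall c, BR *m Df c = BR *m cell R c)
  (V : {set 'I_m}) (hV : sfB BR V) (f : 'I_r -> 'I_m) (finj : injective f)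
  (hf : forall c, c \in V <-> exists j, f j = c) :
  \det (Cmat f0 Df *m selm R f) != 0.
Proof.
have hG1 := G1 f0inj hf0 hDs hDb.
apply/negP; rewrite -det_tr => /det0P [v vn0 hv].
move/negP: vn0; apply; apply/eqP.
rewrite -[v]trmxK; apply/eqP; rewrite trmx_eq0; apply/eqP.
apply: (G2 hV finj hf).
by rewrite -hG1 -!mulmxA (mulmxA (Cmat f0 Df)) -[_ *m v^T]trmxK trmx_mul trmxK hv
  trmx0 !mulmx0.
Qed.

Lemma G5 (R : realType) n m (BR : 'M[R]_(n, m)) (V0 : {set 'I_m}) (h0 : sfB BR V0) r
  (f0 : 'I_r -> 'I_m) (f0inj : injective f0)
  (hf0 : forall c, c \in V0 <-> exists j, f0 j = c)
  (Df : 'I_m -> 'cV[R]_m) (hDs : forall c, supp_in (Df c) V0)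
  (hDb : forall c, BR *m Df c = BR *m cell R c)
  (V : {set 'I_m}) (hV : sfB BR V) : #|V| = r.
Proof.
have hG1 := G1 f0inj hf0 hDs hDb.
pose g := (enum_val : 'I_#|V| -> 'I_m).
have ginj : injective g by exact: enum_val_inj.
have hg : forall c, c \in V <-> exists j, g j = c.
  move=> c; split; last by move=> [j <-]; exact: enum_valP.
  by move=> cV; exists (enum_rank_in cV c); rewrite /g enum_rankK_in.
pose C1 := Cmat f0 Df *m selm R g.
have hC1 : BR *m selm R g = BR *m selm R f0 *m C1 by rewrite mulmxA hG1.
pose xs j := proj1_sig (cid (hV.2 (cell R (f0 j)))).
have hxs j : supp_in (xs j) V /\ BR *m xs j = BR *m cell R (f0 j)
  := proj2_sig (cid (hV.2 (cell R (f0 j)))).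
pose C2 := \matrix_(i, j) ((selm R g)^T *m xs j) i 0 : 'M[R]_(#|V|, r).
have hC2 : BR *m selm R g *m C2 = BR *m selm R f0.
  apply/matrixP => i j.
  transitivity ((BR *m selm R g *m ((selm R g)^T *m xs j)) i 0).
    by rewrite !mxE; apply: eq_bigr => k _; rewrite !mxE.
  rewrite -mulmxA -(selm_supp ginj hg (hxs j).1) (hxs j).2 cellE.
  rewrite mxE (bigD1 (f0 j)) //= big1 ?addr0; first by rewrite mxE eqxx mulr1.
  by move=> c hc; rewrite mxE (negbTE hc) mulr0.
have E1 : C1 *m C2 = 1%:M.
  apply/eqP; rewrite -subr_eq0; apply/eqP.
  apply: (inj_mul0 (G2 h0 f0inj hf0)).
  by rewrite mulmxBr mulmxA -hC1 hC2 mulmx1 subrr.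
have E2 : C2 *m C1 = 1%:M.
  apply/eqP; rewrite -subr_eq0; apply/eqP.
  apply: (inj_mul0 (G2 hV ginj hg)).
  by rewrite mulmxBr mulmxA hC2 -hC1 mulmx1 subrr.
apply/eqP; rewrite eqn_leq; apply/andP; split.
  have := mxrankM_maxl C2 C1; rewrite E2 mxrank1 => h.
  exact: leq_trans h (rank_leq_col _).
have := mxrankM_maxl C1 C2; rewrite E1 mxrank1 => h.
exact: leq_trans h (rank_leq_col _).
Qed.


Lemma tors_order_eq d (X : cw_chain d) V q :
  aiso (cbd X d.-1) (cbd X d) V q -> tors_order X V = q.
Proof.
move=> h.
have h' : is_tors_order X V (tors_order X V).
  exact: (epsilon_spec (inhabits 0%N) (is_tors_order X V) (ex_intro _ q h)).
exact: aiso_uniq h' h.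
Qed.

Lemma bd_bd_d d (hd : (0 < d)%N) (X : cw_chain d) : cbd X d.-1 *m cbd X d = 0.
Proof.
case: d hd X => [//|d'] _ X /=.
case: d' X => [|d''] X /=; first by rewrite mul0mx.
exact: bd_bd.
Qed.

Lemma bdR_intr (R : realType) d (X : cw_chain d) :
  bdR R X = map_mx intr (cbd X d).
Proof. by []. Qed.

Lemma map_selm (R : realType) m r (f : 'I_r -> 'I_m) :
  map_mx (intr : int -> R) (selm int f) = selm R f.
Proof. by apply/matrixP => i j; rewrite !mxE; case: (_ == _). Qed.

Lemma L5 (R : realType) d (hd : (0 < d)%N) (X : cw_chain d)
  (V0 : {set 'I_(ncell X d)}) (hV0 : spanning_forest R X V0)
  (f0 : 'I_#|V0| -> 'I_(ncell X d)) (f0inj : injective f0)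
  (hf0 : forall c, c \in V0 <-> exists j, f0 j = c)
  (Df : 'I_(ncell X d) -> 'cV[R]_(ncell X d)) (hDs : forall c, supp_in (Df c) V0)
  (hDb : forall c, bdR R X *m Df c = bdR R X *m cell R c)
  (V : {set 'I_(ncell X d)}) (f : 'I_#|V0| -> 'I_(ncell X d)) (finj : injective f)
  (hf : forall c, c \in V <-> exists j, f j = c) :
  \det (Cmat f0 Df *m selm R f) ^+ 2 =
  if `[< spanning_forest R X V >] then
    ((tors_order X V)%:R / (tors_order X V0)%:R) ^+ 2 else 0.
Proof.
case: asboolP => hV; last first.
  apply/eqP; rewrite expf_eq0 /=; apply/negPn/negP => hdet; apply: hV.
  exact: (G3 hV0 f0inj hf0 hDs hDb finj hf hdet).
have hC := bd_bd_d hd X.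
have hG1 := G1 f0inj hf0 hDs hDb.
pose Bf := cbd X d *m selm int f.
pose Bf0 := cbd X d *m selm int f0.
have mBf : map_mx intr Bf = bdR R X *m selm R f by rewrite map_mxM map_selm.
have mBf0 : map_mx intr Bf0 = bdR R X *m selm R f0 by rewrite map_mxM map_selm.
have injf : forall x : 'cV[R]_#|V0|, map_mx intr Bf *m x = 0 -> x = 0.
  by move=> x; rewrite mBf; exact: (@G2 R _ _ (bdR R X) V hV _ f finj hf x).
have injf0 : forall x : 'cV[R]_#|V0|, map_mx intr Bf0 *m x = 0 -> x = 0.
  by move=> x; rewrite mBf0; exact: (@G2 R _ _ (bdR R X) V0 hV0 _ f0 f0inj hf0 x).
have [L hL [Rm hRm [dd _ hB]]] := int_Smith_normal_form Bf.
have [L0 hL0 [Rm0 hRm0 [dd0 _ hB0]]] := int_Smith_normal_form Bf0.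
have [hdd hr] := snf_nonzero injf hRm hB.
have [hdd0 _] := snf_nonzero injf0 hRm0 hB0.
have tV := tors_order_eq (T1 hC finj hf hL hRm hdd hr hB).
have tV0 := tors_order_eq (T1 hC f0inj hf0 hL0 hRm0 hdd0 hr hB0).
have E : map_mx intr (L *m Dg _ _ dd *m Rm) =
         map_mx intr (L0 *m Dg _ _ dd0 *m Rm0) *m (Cmat f0 Df *m selm R f).
  rewrite -hB -hB0 mBf mBf0 mulmxA -[in LHS]hG1.
  by rewrite -!mulmxA.
have := T2 hL hL0 hRm hRm0 hdd hdd0 hr E.
rewrite -tV -tV0 => ->.
have t0 : ((tors_order X V0)%:R : R) != 0.
  rewrite tV0 pnatr_eq0 absz_eq0; apply/prodf_neq0 => i _; exact: hdd0.
by rewrite mulrAC divff // mul1r real_normK // num_real.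
Qed.


Lemma big_img (Rg : Type) (idx : Rg) (aop : Monoid.com_law idx) (I J : finType)
  (f : I -> J) (finj : injective f) (V : {set J})
  (hf : forall c, c \in V <-> exists j, f j = c) (G : J -> Rg) :
  \big[aop/idx]_(c in V) G c = \big[aop/idx]_j G (f j).
Proof.
have -> : V = [set f j | j in predT].
  apply/setP => c; apply/idP/imsetP.
    by move/hf => [j <-]; exists j.
  by move=> [j _ ->]; apply/hf; exists j.
rewrite big_imset /=; last by move=> x y _ _; exact: finj.
by apply: eq_bigl => j.
Qed.

Lemma mul_selm (Rg : pzSemiRingType) n m r (A : 'M[Rg]_(n, m)) (f : 'I_r -> 'I_m) i j :
  (A *m selm Rg f) i j = A i (f j).
Proof.
rewrite mxE (bigD1 (f j)) //= big1 ?addr0; first by rewrite mxE eqxx mulr1.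
by move=> c hc; rewrite mxE (negbTE hc) mulr0.
Qed.

Lemma sum_nat_delta (Rg : nmodType) (a b k : nat) (x : Rg) :
  \sum_(a <= j < b) (if k == j then x else 0) = if (a <= k < b)%N then x else 0.
Proof.
rewrite -big_mkcond /= big_const_seq.
have -> : count (fun j => k == j) (index_iota a b) = count_mem k (index_iota a b).
  by apply: eq_count => j; rewrite eq_sym.
rewrite count_uniq_mem ?iota_uniq // mem_index_iota.
by case: ifP => //= _; rewrite addr0.
Qed.

Lemma regroup (Rg : nmodType) (T : finType) (P : pred T) (jf : T -> nat) (N : nat)
  (G : T -> nat -> Rg) (hj : forall V, P V -> (jf V <= N)%N) :
  \sum_(1 <= j < N.+1) \sum_(V | P V && (jf V == j)) G V j =
  \sum_(V | P V && (0 < jf V)%N) G V (jf V).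
Proof.
transitivity (\sum_(1 <= j < N.+1) \sum_(V | P V) (if jf V == j then G V (jf V) else 0)).
  apply: eq_bigr => j _; rewrite big_mkcondr /=; apply: eq_bigr => V _.
  by case: eqP => [->|].
rewrite exchange_big /= [RHS]big_mkcondr /=; apply: eq_bigr => V PV.
rewrite sum_nat_delta ltnS (hj _ PV) andbT.
by [].
Qed.


Unset Implicit Arguments.
Set Strict Implicit.

Theorem theorem8p2 (R : realType) (d : nat) (hd : (0 < d)%N) (X : cw_chain d)
  (V0 : {set 'I_(ncell X d)}) (hV0 : spanning_forest R X V0)
  (N : nat) (e : 'I_N -> 'I_(ncell X d)) (he_inj : injective e)
  (he_im : forall c, c \notin V0 <-> exists a, e a = c)
  (D : 'I_N -> 'cV[R]_(ncell X d))
  (hD : forall a, supp_in (D a) V0 /\ bdR R X *m D a = bdR R X *m cell R (e a)) :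
  let z a := cell R (e a) - D a in
  let Mesh := \matrix_(a < N, b < N) cdot (z a) (z b) in
  let MeshS := \matrix_(a < N, b < N) cdot (D a) (D b) in
  let c (j : nat) : R :=
    \sum_(V : {set 'I_(ncell X d)} |
            `[< spanning_forest R X V >] && (#|V :&: ~: V0| == j))
      (((tors_order X V)%:R / (tors_order X V0)%:R) ^+ 2) in
  \det (('X + 1)%:M - map_mx polyC Mesh) = \det ('X%:M - map_mx polyC MeshS) /\
  \det ('X%:M - map_mx polyC MeshS)
    = 'X^N + \sum_(1 <= j < N.+1) ((-1) ^+ j * c j) *: 'X^(N - j).
Proof.
move=> z Mesh MeshS c.
pose f0 : 'I_#|V0| -> 'I_(ncell X d) := enum_val.
have f0inj : injective f0 by exact: enum_val_inj.
have hf0 : forall c, c \in V0 <-> exists j, f0 j = c.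
  move=> c'; split; last by move=> [j <-]; exact: enum_valP.
  by move=> cV; exists (enum_rank_in cV c'); rewrite /f0 enum_rankK_in.
have he : forall c, c \in ~: V0 <-> exists a, e a = c.
  by move=> c'; rewrite in_setC; exact: he_im.
have eV0 a : e a \notin V0 by apply/he_im; exists a.
have f0V0 i : f0 i \in V0 by apply/hf0; exists i.
pose Df c := match [pick a | e a == c] with Some a => D a | None => cell R c end.
have hDe a : Df (e a) = D a.
  rewrite /Df; case: pickP => [a' /eqP /he_inj -> //|/(_ a)].
  by rewrite eqxx.
have hDV c' : c' \in V0 -> Df c' = cell R c'.
  move=> cV; rewrite /Df; case: pickP => [a' /eqP ea|//].
  by move: (eV0 a'); rewrite ea cV.
have hDs c' : supp_in (Df c') V0.
  case: (boolP (c' \in V0)) => cV.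
    by rewrite hDV // => i iV; rewrite mxE; case: eqP => // ic; rewrite ic cV in iV.
  by have [a <-] := (he_im c').1 cV; rewrite hDe; exact: (hD a).1.
have hDb c' : bdR R X *m Df c' = bdR R X *m cell R c'.
  case: (boolP (c' \in V0)) => cV; first by rewrite hDV.
  by have [a <-] := (he_im c').1 cV; rewrite hDe; exact: (hD a).2.
have split_sum (Rg : nmodType) (G : 'I_(ncell X d) -> Rg) :
    \sum_c' G c' = \sum_i G (f0 i) + \sum_a G (e a).
  rewrite (bigID (fun c' => c' \in V0)) /=; congr (_ + _).
    exact: (big_img _ f0inj hf0).
  rewrite -(big_img _ he_inj he); apply: eq_bigl => c'; by rewrite in_setC.
pose Cm := Cmat f0 Df.
pose P := Cm *m selm R e.
have hP i a : P i a = D a (f0 i) 0 by rewrite /P mul_selm /Cm /Cmat mxE hDe.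
have hCf0 i i' : Df (f0 i') (f0 i) 0 = (i == i')%:R.
  by rewrite hDV // mxE (inj_eq f0inj) eqxx andbT.
have De a a' : D a (e a') 0 = 0 := (hD a).1 _ (eV0 a').
have S3 a b : \sum_a' D a (e a') 0 * D b (e a') 0 = 0.
  by apply: big1 => a' _; rewrite De mul0r.
have part1 : Mesh = 1%:M + MeshS.
  have zf0 a i : z a (f0 i) 0 = - D a (f0 i) 0.
    rewrite /z !mxE; case: eqP => [hi|]; last by rewrite sub0r.
    by move: (f0V0 i) (eV0 a); rewrite hi => ->.
  have ze a a' : z a (e a') 0 = (a' == a)%:R.
    by rewrite /z !mxE De (inj_eq he_inj) eqxx andbT subr0.
  apply/matrixP => a b; rewrite /Mesh /MeshS !mxE /cdot !split_sum S3 addr0.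
  have -> : \sum_i z a (f0 i) 0 * z b (f0 i) 0 = \sum_i D a (f0 i) 0 * D b (f0 i) 0.
    by apply: eq_bigr => i _; rewrite !zf0 mulrNN.
  have -> : \sum_a' z a (e a') 0 * z b (e a') 0 = (a == b)%:R.
    by under eq_bigr do rewrite !ze; rewrite sum_delta.
  by rewrite addrC.
have part2 : MeshS = P^T *m P.
  apply/matrixP => a b; rewrite /MeshS !mxE /cdot split_sum S3 addr0.
  by apply: eq_bigr => i _; rewrite hP [P^T a i]mxE hP.
split.
  congr determinant; apply/matrixP => a b; rewrite part1 !mxE.
  case: (a == b); rewrite ?mulr1n ?mulr0n ?add0r // polyCD polyC1.
  by rewrite opprD addrA addrK.
have hPe i a : Df (e a) (f0 i) 0 = P i a by rewrite /P mul_selm /Cm /Cmat mxE.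
clearbody P.
pose r := #|V0|.
pose y (c' : 'I_(ncell X d)) : {poly R} := if c' \in V0 then 'X else -1.
pose A := map_mx polyC Cm.
pose mP := map_mx polyC P.
have part3 : A *m (diag_mx (\row_c' y c') *m A^T) = 'X%:M - mP *m mP^T.
  apply/matrixP => i j; rewrite mul_diag_mx mxE split_sum.
  have -> : \sum_i' A i (f0 i') * (\matrix_(i0, j0) ((\row_c' y c') 0 i0 * A^T i0 j0))
              (f0 i') j = 'X *+ (i == j).
    rewrite (bigD1 i) //= big1 ?addr0.
      by rewrite !mxE /y f0V0 !hCf0 eqxx polyC1 mul1r eq_sym; case: (i == j);
        rewrite ?mulr1n ?mulr0n ?polyC0 ?mulr1 ?mulr0.
    by move=> i' hi'; rewrite !mxE hCf0 eq_sym (negbTE hi') polyC0 mul0r.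
  have -> : \sum_a A i (e a) * (\matrix_(i0, j0) ((\row_c' y c') 0 i0 * A^T i0 j0))
              (e a) j = - \sum_a (P i a)%:P * (P j a)%:P.
    rewrite -sumrN; apply: eq_bigr => a _.
    by rewrite !mxE /y (negbTE (eV0 a)) !hPe mulN1r mulrN.
  rewrite [in RHS]mxE [('X%:M) i j]mxE [X in _ = _ + X]mxE [(mP *m _) i j]mxE; congr (_ - _).
  by apply: eq_bigr => a _; rewrite !mxE.
have part4 : r`!%:R * \det (A *m (diag_mx (\row_c' y c') *m A^T)) =
    \sum_(f : {ffun 'I_r -> 'I_(ncell X d)})
      (\prod_i y (f i)) * ((\det (Cm *m selm R f))%:P) ^+ 2.
  rewrite cauchy_binet_sq; apply: eq_bigr => f _; congr (_ * _ ^+ 2).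
  have -> : \matrix_(i, j) A i (f j) = map_mx polyC (Cm *m selm R f).
    by apply/matrixP => k l; rewrite [LHS]mxE [RHS]mxE mul_selm /A mxE.
  by rewrite det_map_mx.
pose w (V : {set 'I_(ncell X d)}) : R :=
  ((tors_order X V)%:R / (tors_order X V0)%:R) ^+ 2.
pose sf (V : {set 'I_(ncell X d)}) := `[< spanning_forest R X V >].
pose HH (V : {set 'I_(ncell X d)}) := (\prod_(c' in V) y c') * (w V)%:P.
have hterm (f : {ffun 'I_r -> 'I_(ncell X d)}) :
    (\prod_i y (f i)) * ((\det (Cm *m selm R f))%:P) ^+ 2 =
    if injectiveb f then
      (if sf [set f i | i in predT] then HH [set f i | i in predT] else 0)
    else 0.
  case: (boolP (injectiveb f)) => [/injectiveP finj | /injectivePn [i1 [i2 hne heq]]].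
    set V := [set f i | i in predT].
    have hf : forall c', c' \in V <-> exists j, f j = c'.
      move=> c'; split; first by move/imsetP => [jj _ ->]; exists jj.
      by move=> [jj <-]; apply/imsetP; exists jj.
    have := L5 hd hV0 f0inj hf0 hDs hDb finj hf.
    rewrite -[(_%:P) ^+ 2]rmorphXn => ->.
    rewrite /HH /sf (big_img _ finj hf).
    by case: asboolP => _; rewrite ?polyC0 ?mulr0.
  have -> : \det (Cm *m selm R f) = 0.
    rewrite -det_tr; apply: (determinant_alternate hne) => k.
    by rewrite [LHS]mxE [RHS]mxE !mul_selm heq.
  by rewrite polyC0 expr2 mul0r mulr0.
have part5 : \sum_(f : {ffun 'I_r -> 'I_(ncell X d)})
      (\prod_i y (f i)) * ((\det (Cm *m selm R f))%:P) ^+ 2 =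
    r`!%:R * \sum_(V | sf V) HH V.
  under eq_bigr do rewrite hterm.
  rewrite (partition_big (fun f : {ffun 'I_r -> 'I_(ncell X d)} =>
                            [set f i | i in predT]) xpredT) //=.
  rewrite mulr_sumr [RHS]big_mkcond /=; apply: eq_bigr => V _.
  transitivity (\sum_(f : {ffun 'I_r -> 'I_(ncell X d)} |
                  ([set f i | i in predT] == V) && injectiveb f)
                  (if sf V then HH V else 0)).
    rewrite [RHS]big_mkcondr /=; apply: eq_bigr => f /eqP ->.
    by case: (injectiveb f).
  rewrite sumr_const.
  case: (boolP (sf V)) => hsf; last by rewrite mul0rn.
  have hcard : #|V| = r.
    exact: (G5 hV0 f0inj hf0 hDs hDb (asboolW hsf)).
  rewrite mulr_natl; congr (_ *+ _).
  rewrite -ffactnn.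
  have -> : (r ^_ r = #|V| ^_ #|'I_r|)%N by rewrite hcard card_ord.
  rewrite -card_inj_ffuns_on.
  apply: eq_card => f; rewrite inE /=.
  rewrite unfold_in /=.
  case: (boolP (injectiveb f)) => [/injectiveP finj|]; last by rewrite !andbF.
  rewrite !andbT; apply/eqP/ffun_onP.
    by move=> <- x; apply: imset_f.
  move=> hx; apply/eqP; rewrite eqEcard; apply/andP; split.
    by apply/subsetP => c' /imsetP [x _ ->]; exact: hx.
  by rewrite card_imset // hcard card_ord.
have hdetS : \det ('X%:M - mP *m mP^T) = \sum_(V | sf V) HH V.
  have hr0 : (r`!%:R : {poly R}) != 0.
    by rewrite -polyC_natr polyC_eq0 pnatr_eq0 -lt0n fact_gt0.
  apply: (mulfI hr0); rewrite -part5 -part4 part3.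
  by [].
have hMS : map_mx polyC MeshS = mP^T *m mP by rewrite part2 map_mxM map_trmx.
have hsyl := @sylvester _ _ _ ('X : {poly R}) mP mP^T.
have hX : ('X ^+r : {poly R}) != 0 by rewrite expf_neq0 // polyX_eq0.
apply: (mulfI hX); rewrite hMS -hsyl hdetS.
pose jf (V : {set 'I_(ncell X d)}) := #|V :&: ~: V0|.
have hNc : #|~: V0| = N.
  have -> : ~: V0 = [set e a | a in predT].
    apply/setP => c'; apply/idP/imsetP.
      by move/he => [a <-]; exists a.
    by move=> [a _ ->]; apply/he; exists a.
  by rewrite card_imset // card_ord.
have hsfV (V : {set 'I_(ncell X d)}) : sf V ->
    [/\ #|V| = r, (jf V <= N)%N, (jf V <= r)%N & #|V :&: V0| = (r - jf V)%N].
  move=> hsf.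
  have hcard : #|V| = r by exact: (G5 hV0 f0inj hf0 hDs hDb (asboolW hsf)).
  have h1 : (jf V <= N)%N by rewrite -hNc; apply: subset_leq_card; exact: subsetIr.
  have h2 : (jf V <= r)%N by rewrite -hcard; apply: subset_leq_card; exact: subsetIl.
  split => //.
  have := cardsID V0 V; rewrite setDE hcard -/(jf V) => <-.
  by rewrite addnK.
pose G (V : {set 'I_(ncell X d)}) (j : nat) : {poly R} :=
  ((-1) ^+ j * w V) *: 'X ^+(r + (N - j)).
have hLHS (V : {set 'I_(ncell X d)}) : sf V -> 'X ^+N * HH V = G V (jf V).
  move=> hsf; have [hc h1 h2 h3] := hsfV V hsf.
  rewrite /HH /G (big_setID V0) /= setDE.
  rewrite (eq_bigr (fun _ => 'X)); last by move=> c'; rewrite inE /y => /andP [_ ->].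
  rewrite [X in _ * (_ * X * _)](eq_bigr (fun _ => -1)); last first.
    by move=> c'; rewrite !inE /y => /andP [_ /negbTE ->].
  rewrite !prodr_const -/(jf V) h3 -mul_polyC (polyCM ((-1) ^+ jf V) (w V)).
  rewrite rmorph_sign.
  have -> : (r + (N - jf V) = N + (r - jf V))%N by lia.
  rewrite exprD.
  set s1 := (-1) ^+ _; set s2 := (w V)%:P; set x1 := 'X^N; set x2 := 'X^(r - jf V).
  ring.
have hw0 : w V0 = 1.
  have := L5 hd hV0 f0inj hf0 hDs hDb f0inj hf0.
  have -> : Cm *m selm R f0 = 1%:M.
    by apply/matrixP => i i'; rewrite mul_selm /Cm /Cmat !mxE hCf0.
  rewrite det1 expr1n; case: asboolP => // _ <-.
have sf0 : sf V0 by apply/asboolP.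
have j0 : jf V0 = 0%N by rewrite /jf setICr cards0.
have hpred (V : {set 'I_(ncell X d)}) : sf V && (V != V0) = sf V && (0 < jf V)%N.
  case: (boolP (sf V)) => //= hsf.
  have [hc _ _ _] := hsfV V hsf.
  apply/idP/idP.
    move=> hne; rewrite lt0n; apply: contra hne.
    rewrite cards_eq0 setI_eq0 disjoints_subset setCK => hsub.
    by rewrite eqEcard hsub /= hc.
  by apply: contraTneq => ->; rewrite j0.
rewrite (bigD1 V0) //= mulrDr mulr_sumr (eq_bigr (fun V => G V (jf V))); last first.
  by move=> V /andP [hsf _]; rewrite hLHS.
rewrite hLHS // j0.
have -> : G V0 0%N = 'X ^+ (r + N) by rewrite /G hw0 expr0 mul1r scale1r subn0.
rewrite mulrDr -exprD; congr (_ + _).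
rewrite (eq_bigl (fun V => sf V && (0 < jf V)%N)); last by move=> V; rewrite hpred.
rewrite -(regroup (P := sf) (jf := jf) (N := N) G); last by move=> V /hsfV [].
rewrite mulr_sumr; apply: eq_bigr => j _.
rewrite -scalerAr -exprD /c mulr_sumr scaler_suml.
by apply: eq_bigr => V _.
Qed.
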